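(* Let $k\ge4$, let $d_{\mathrm{ubd}}(k)=2^{k-1}k\log2$, and let $d_{\mathrm{lbd}}(4)=16.7$, $d_{\mathrm{lbd}}(k)=(2^{k-1}-2)k\log2$ for $k\ge5$. For $d\in[d_{\mathrm{lbd}}(k),d_{\mathrm{ubd}}(k)]$ let $x(k,d)$ be the unique solution of $\Psi_d(x)=x$ in $[\frac12-\frac1{2^k},\frac12]$ and $\Phi^\star(d)=\Phi_k(d,x(k,d))$. Then $d\mapsto\Phi^\star(d)$ is continuous on $[d_{\mathrm{lbd}}(k),d_{\mathrm{ubd}}(k)]$, $\Phi^\star(d_{\mathrm{lbd}}(k))>0$ and $\Phi^\star(d_{\mathrm{ubd}}(k))<0$.
   Context: $\hat\Psi(x)=\frac{1-2x^{k-1}}{1-x^{k-1}}$, $\dot\Psi(v)=\frac{1-v^{d-1}}{2-v^{d-1}}$, $\Psi_d=\dot\Psi\circ\hat\Psi$; $\Phi_k(d,x)=-\log(1-x)-d(1-k^{-1}-d^{-1})\log(1-2x^k)+(d-1)\log(1-x^{k-1})$. (Existence and uniqueness of $x(k,d)$ in this range is known.) *)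

(* Defs.v *)
From Stdlib Require Import Reals ClassicalEpsilon.
Open Scope R_scope.

Definition hatPsi (k : nat) (x : R) : R :=
  (1 - 2 * x ^ (k - 1)) / (1 - x ^ (k - 1)).

(* dotPsi(v) = (1 - v^(d-1)) / (2 - v^(d-1)), real exponent d-1 (v > 0 in range) *)
Definition dotPsi (d : R) (v : R) : R :=
  (1 - Rpower v (d - 1)) / (2 - Rpower v (d - 1)).

Definition Psi (k : nat) (d : R) (x : R) : R := dotPsi d (hatPsi k x).

Definition Phi (k : nat) (d x : R) : R :=
  - ln (1 - x) - d * (1 - / INR k - / d) * ln (1 - 2 * x ^ k)
  + (d - 1) * ln (1 - x ^ (k - 1)).

Definition d_ubd (k : nat) : R := 2 ^ (k - 1) * INR k * ln 2.
Definition d_lbd (k : nat) : R :=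
  if Nat.eqb k 4 then 16.7 else (2 ^ (k - 1) - 2) * INR k * ln 2.

Definition fp_spec (k : nat) (d x : R) : Prop :=
  1/2 - 1 / 2 ^ k <= x <= 1/2 /\ Psi k d x = x.

(* x(k,d): the (known to be unique) solution of Psi_d(x) = x in the interval,
   selected by Hilbert's epsilon. *)
Definition xkd (k : nat) (d : R) : R := epsilon (inhabits 0) (fp_spec k d).

Definition Phistar (k : nat) (d : R) : R := Phi k d (xkd k d).

Definition continuous_on_closed (f : R -> R) (a b : R) : Prop :=
  forall d0, a <= d0 <= b ->
    forall eps, 0 < eps -> exists delta, 0 < delta /\
      forall d, a <= d <= b -> Rabs (d - d0) < delta -> Rabs (f d - f d0) < eps.

(* Main.v *)
Require Import Defs.
From Stdlib Require Import Reals Lra Lia ClassicalEpsilon.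
From Coquelicot Require Import Coquelicot.
Open Scope R_scope.

Lemma deriv_cont f x l : is_derive f x l -> continuity_pt f x.
Proof.
  intro H. apply continuity_pt_filterlim.
  apply (@ex_derive_continuous R_AbsRing R_NormedModule). exists l. exact H.
Qed.

Lemma mono_deriv f df a b : a <= b ->
  (forall x, a <= x <= b -> is_derive f x (df x)) ->
  (forall x, a <= x <= b -> 0 <= df x) -> f a <= f b.
Proof.
  intros Hab Hd Hp.
  destruct (MVT_gen f a b df) as [c [Hc Heq]].
  - intros x Hx. rewrite Rmin_left in Hx by lra. rewrite Rmax_right in Hx by lra.
    apply Hd; lra.
  - intros x Hx. rewrite Rmin_left in Hx by lra. rewrite Rmax_right in Hx by lra.
    apply (deriv_cont f x (df x)); apply Hd; lra.
  - rewrite Rmin_left in Hc by lra. rewrite Rmax_right in Hc by lra.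
    assert (0 <= df c * (b - a)) by (apply Rmult_le_pos; [apply Hp; lra | lra]).
    lra.
Qed.

Lemma smono_deriv f df a b : a < b ->
  (forall x, a <= x <= b -> is_derive f x (df x)) ->
  (forall x, a <= x <= b -> 0 < df x) -> f a < f b.
Proof.
  intros Hab Hd Hp.
  destruct (MVT_gen f a b df) as [c [Hc Heq]].
  - intros x Hx. rewrite Rmin_left in Hx by lra. rewrite Rmax_right in Hx by lra.
    apply Hd; lra.
  - intros x Hx. rewrite Rmin_left in Hx by lra. rewrite Rmax_right in Hx by lra.
    apply (deriv_cont f x (df x)); apply Hd; lra.
  - rewrite Rmin_left in Hc by lra. rewrite Rmax_right in Hc by lra.
    assert (0 < df c * (b - a)) by (apply Rmult_lt_0_compat; [apply Hp; lra | lra]).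
    lra.
Qed.

Lemma ln1m_le z : 0 <= z < 1 -> ln (1 - z) <= - z - z^2/2.
Proof.
  intros Hz.
  set (f := fun t => - t - t^2/2 - ln (1 - t)).
  assert (f 0 <= f z).
  { apply (mono_deriv f (fun t => t^2/(1-t))); try lra.
    - intros t Ht. unfold f. auto_derive. lra. field. lra.
    - intros t Ht. apply Rmult_le_pos. nra. apply Rlt_le, Rinv_0_lt_compat. lra. }
  unfold f in H. rewrite Rminus_0_r, ln_1 in H. lra.
Qed.

Lemma ln1m_ge z : 0 <= z <= 1/2 -> - z - z^2/2 - 2/3*z^3 <= ln (1 - z).
Proof.
  intros Hz.
  set (f := fun t => ln (1 - t) + t + t^2/2 + 2/3*t^3).
  assert (f 0 <= f z).
  { apply (mono_deriv f (fun t => (t^2 - 2*t^3)/(1-t))); try lra.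
    - intros t Ht. unfold f. auto_derive. lra. field. lra.
    - intros t Ht. apply Rmult_le_pos. nra. apply Rlt_le, Rinv_0_lt_compat. lra. }
  unfold f in H. rewrite Rminus_0_r, ln_1 in H. lra.
Qed.

Lemma ln1m_ge2 z : 0 <= z <= 1/2 -> - z - z^2 <= ln (1 - z).
Proof. intros Hz. pose proof (ln1m_ge z Hz). nra. Qed.

Lemma ln_le_lin x : 0 < x -> ln x <= x - 1.
Proof.
  intro Hx. pose proof (exp_ineq1_le (ln x)). rewrite exp_ln in H by lra. lra.
Qed.

Definition Aser (u : R) := 2 * (u + u^3/3 + u^5/5 + u^7/7).

Lemma atanh_bounds u : 0 <= u <= 1/2 ->
  Aser u <= ln ((1+u)/(1-u)) <= Aser u + 2*u^9/(9*(1-u^2)).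
Proof.
  intros Hu. split.
  - set (f := fun t => ln ((1+t)/(1-t)) - Aser t).
    assert (f 0 <= f u).
    { apply (mono_deriv f (fun t => 2*t^8/(1-t^2))); try lra.
      - intros t Ht. unfold f, Aser. auto_derive.
        + repeat split; try lra. apply Rmult_lt_0_compat; [lra | apply Rinv_0_lt_compat; lra].
        + field; repeat split; try lra; nra.
      - intros t Ht. apply Rmult_le_pos. nra. apply Rlt_le, Rinv_0_lt_compat. nra. }
    unfold f, Aser in H. replace ((1+0)/(1-0)) with 1 in H by field. rewrite ln_1 in H.
    unfold Aser. lra.
  - set (f := fun t => Aser t + 2*t^9/(9*(1-t^2)) - ln ((1+t)/(1-t))).
    assert (f 0 <= f u).
    { apply (mono_deriv f (fun t => 4*t^10/(9*(1-t^2)^2))); try lra.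
      - intros t Ht. unfold f, Aser. auto_derive.
        + repeat split; try lra; try nra. apply Rmult_lt_0_compat; [lra | apply Rinv_0_lt_compat; lra].
        + field; repeat split; try lra; nra.
      - intros t Ht. apply Rmult_le_pos. nra. apply Rlt_le, Rinv_0_lt_compat. 
        assert (0 < 1 - t^2) by nra. nra. }
    unfold f, Aser in H. replace ((1+0)/(1-0)) with 1 in H by field. rewrite ln_1 in H.
    unfold Aser. lra.
Qed.

Lemma ln_bounds_ge1 r : 1 <= r <= 3 ->
  Aser ((r-1)/(r+1)) <= ln r <= Aser ((r-1)/(r+1)) + 2*((r-1)/(r+1))^9/(9*(1-((r-1)/(r+1))^2)).
Proof.
  intros Hr.
  assert (Hu : 0 <= (r-1)/(r+1) <= 1/2).
  { split. apply Rdiv_le_0_compat; lra.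
    apply Rmult_le_reg_r with (r+1). lra. unfold Rdiv. rewrite Rmult_assoc, Rinv_l; lra. }
  pose proof (atanh_bounds _ Hu).
  replace ((1 + (r - 1) / (r + 1)) / (1 - (r - 1) / (r + 1))) with r in H by (field; lra).
  exact H.
Qed.

Lemma ln2_bounds : 0.693147 < ln 2 < 0.693148.
Proof.
  replace 2 with ((4/3)*(3/2)) by field.
  rewrite ln_mult by lra.
  pose proof (ln_bounds_ge1 (4/3)) as H1. pose proof (ln_bounds_ge1 (3/2)) as H2.
  unfold Aser in *. 
  assert (A1 : 1 <= 4/3 <= 3) by lra. assert (A2 : 1 <= 3/2 <= 3) by lra.
  specialize (H1 A1). specialize (H2 A2).
  replace ((4/3-1)/(4/3+1)) with (1/7) in H1 by field.
  replace ((3/2-1)/(3/2+1)) with (1/5) in H2 by field.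
  cbv [pow] in H1, H2. lra.
Qed.

Lemma pow_S1 x k : (1 <= k)%nat -> x^k = x * x^(k-1).
Proof. intros. replace k with (S (k-1)) at 1 by lia. reflexivity. Qed.

Lemma pow_S2 x k : (2 <= k)%nat -> x^(k-1) = x * x^(k-2).
Proof. intros. replace (k-1)%nat with (S (k-2)) by lia. reflexivity. Qed.

Lemma half_pow k : (1/2)^k = / 2^k.
Proof. replace (1/2) with (/2) by field. apply pow_inv. Qed.

Lemma N_ge16 k : (4 <= k)%nat -> 16 <= 2^k.
Proof. intros. replace 16 with (2^4) by (simpl; lra). apply Rle_pow; lra || lia. Qed.

Definition aa (k : nat) := 1/2 - 1/2^k.

Lemma aa_ge k : (4 <= k)%nat -> 7/16 <= aa k.
Proof.
  intros. unfold aa. pose proof (N_ge16 k H).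
  assert (1/2^k <= 1/16). { apply Rmult_le_compat_l. lra. apply Rinv_le_contravar; lra. }
  lra.
Qed.

Lemma pow_le1 x n : 0 <= x <= 1 -> x^n <= 1.
Proof. intros. rewrite <- (pow1 n). apply pow_incr. lra. Qed.

Lemma y_bounds k x : (4 <= k)%nat -> 0 < x <= 1/2 -> 0 < x^(k-1) <= 1/8.
Proof.
  intros Hk Hx. split. apply pow_lt; lra.
  apply Rle_trans with ((1/2)^(k-1)). apply pow_incr; lra.
  replace (k-1)%nat with (3 + (k-4))%nat by lia. rewrite pow_add.
  assert (0 < (1/2)^(k-4) <= 1).
  { split. apply pow_lt; lra. apply pow_le1; lra. }
  simpl. nra.
Qed.

Definition G (k : nat) (d x : R) : R :=
  exp ((d-1) * ln (hatPsi k x)) - (1 - 2*x)/(1-x).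

Definition J (k : nat) (d x : R) : R :=
  exp ((d-1) * ln (hatPsi k x)) * x^(k-2) / ((1 - x^(k-1)) * (1 - 2*x^(k-1))).

Definition Gd (k : nat) (d x : R) : R :=
  1/(1-x)^2 - (d-1) * INR (k-1) * J k d x.

Lemma hatPsi_pos k x : (4 <= k)%nat -> 0 < x <= 1/2 -> 0 < hatPsi k x < 1.
Proof.
  intros Hk Hx. pose proof (y_bounds k x Hk Hx). unfold hatPsi.
  split. apply Rdiv_lt_0_compat; lra.
  apply Rmult_lt_reg_r with (1 - x^(k-1)). lra.
  unfold Rdiv. rewrite Rmult_assoc, Rinv_l; lra.
Qed.

Lemma G_deriv k d x : (4 <= k)%nat -> 0 < x <= 1/2 -> is_derive (G k d) x (Gd k d x).
Proof.
  intros Hk Hx. pose proof (y_bounds k x Hk Hx) as Hy.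
  pose proof (hatPsi_pos k x Hk Hx) as Hv.
  unfold G, Gd, J, hatPsi in *. auto_derive.
  - repeat split; try lra. apply Rmult_lt_0_compat; [lra | apply Rinv_0_lt_compat; lra].
  - replace (Init.Nat.pred (k-1)) with (k-2)%nat by lia.
    set (E := exp _). field. repeat split; lra.
Qed.

Definition lnJ (k : nat) (d x : R) : R :=
  (d-1) * ln (hatPsi k x) + INR (k-2) * ln x - ln (1 - x^(k-1)) - ln (1 - 2*x^(k-1)).

Definition lnJd (k : nat) (d x : R) : R :=
  (d-1) * (- (INR (k-1) * x^(k-2)) / ((1 - x^(k-1)) * (1 - 2*x^(k-1))))
  + INR (k-2) / x + INR (k-1) * x^(k-2) / (1 - x^(k-1))
  + 2 * INR (k-1) * x^(k-2) / (1 - 2*x^(k-1)).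

Lemma J_exp k d x : (4 <= k)%nat -> 0 < x <= 1/2 -> J k d x = exp (lnJ k d x).
Proof.
  intros Hk Hx. pose proof (y_bounds k x Hk Hx) as Hy.
  unfold J, lnJ.
  set (A := (d - 1) * ln (hatPsi k x)).
  assert (E : forall a b c e, exp (a + b - c - e) = exp a * exp b / (exp c * exp e)).
  { intros. unfold Rminus. rewrite !exp_plus, !exp_Ropp. field.
    split; apply Rgt_not_eq, exp_pos. }
  rewrite E, !exp_ln by lra.
  rewrite <- (Rpower_pow (k-2) x) by lra. unfold Rpower. reflexivity.
Qed.

Lemma lnJ_deriv k d x : (4 <= k)%nat -> 0 < x <= 1/2 -> is_derive (lnJ k d) x (lnJd k d x).
Proof.
  intros Hk Hx. pose proof (y_bounds k x Hk Hx) as Hy.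
  pose proof (hatPsi_pos k x Hk Hx) as Hv.
  unfold lnJ, lnJd, hatPsi in *. auto_derive.
  - repeat split; try lra. apply Rmult_lt_0_compat; [lra | apply Rinv_0_lt_compat; lra].
  - replace (Init.Nat.pred (k-1)) with (k-2)%nat by lia.
    field. repeat split; lra.
Qed.

Lemma lnJd_neg k d x : (4 <= k)%nat -> 0 < x <= 1/2 -> x^(k-1) * (d-4) >= 1 ->
  lnJd k d x < 0.
Proof.
  intros Hk Hx HC. pose proof (y_bounds k x Hk Hx) as Hy.
  assert (HK : INR (k-1) = INR (k-2) + 1).
  { replace (k-1)%nat with (S (k-2)) by lia. rewrite S_INR. reflexivity. }
  assert (HK2 : 2 <= INR (k-2)).
  { replace 2 with (INR 2) by (simpl; lra). apply le_INR. lia. }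
  rewrite (pow_S2 x k) in * by lia.
  set (p := x^(k-2)) in *. set (y := x * p) in *.
  assert (Hp : 0 < p) by (unfold p; apply pow_lt; lra).
  assert (Hq : 1 <= y*(d-4+4*y)/((1-y)*(1-2*y))).
  { assert (0 < (1-y)*(1-2*y) <= 1) by (split; nra).
    apply Rmult_le_reg_r with ((1-y)*(1-2*y)). lra.
    unfold Rdiv. rewrite Rmult_assoc, Rinv_l by lra. nra. }
  assert (E : lnJd k d x = (INR (k-2) - INR (k-1) * (y * (d - 4 + 4*y) / ((1-y)*(1-2*y)))) / x).
  { unfold lnJd. rewrite (pow_S2 x k) by lia. fold p. fold y. unfold y. field.
    fold y. repeat split; lra. }
  rewrite E. unfold Rdiv at 1. apply Rmult_neg_pos. 2: apply Rinv_0_lt_compat; lra.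
  rewrite HK. nra.
Qed.

Lemma mvt f df a b : a < b -> (forall x, a <= x <= b -> is_derive f x (df x)) ->
  exists c, a <= c <= b /\ f b - f a = df c * (b - a).
Proof.
  intros Hab Hd.
  destruct (MVT_gen f a b df) as [c [Hc Heq]].
  - intros x Hx. rewrite Rmin_left in Hx by lra. rewrite Rmax_right in Hx by lra.
    apply Hd; lra.
  - intros x Hx. rewrite Rmin_left in Hx by lra. rewrite Rmax_right in Hx by lra.
    apply (deriv_cont f x (df x)); apply Hd; lra.
  - rewrite Rmin_left in Hc by lra. rewrite Rmax_right in Hc by lra.
    exists c. split; assumption.
Qed.

Lemma uniq_root (f df : R -> R) a b :
  (forall x, a <= x <= b -> is_derive f x (df x)) ->
  (forall x y, a <= x -> x <= y -> y <= b -> df x <= df y) -> f a < 0 ->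
  forall r1 r2, a <= r1 <= b -> a <= r2 <= b -> f r1 = 0 -> f r2 = 0 -> r1 = r2.
Proof.
  intros Hd Hm Ha.
  assert (W : forall r1 r2, a <= r1 <= b -> a <= r2 <= b -> f r1 = 0 -> f r2 = 0 -> r1 < r2 -> False).
  { intros r1 r2 H1 H2 F1 F2 Hlt.
    assert (a < r1). { destruct (Req_dec a r1) as [h|h]. subst. lra. lra. }
    destruct (mvt f df a r1) as [c0 [Hc0 E0]]; [lra | intros; apply Hd; lra |].
    destruct (mvt f df r1 r2) as [c1 [Hc1 E1]]; [lra | intros; apply Hd; lra |].
    assert (df c0 > 0). { rewrite F1 in E0. 
      destruct (Rlt_le_dec 0 (df c0)); [lra|]. 
      assert (df c0 * (r1 - a) <= 0) by (apply Rmult_le_0_r; lra). lra. }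
    assert (df c1 = 0). { rewrite F1, F2 in E1. 
      assert (E1' : df c1 * (r2 - r1) = 0) by lra.
      apply Rmult_integral in E1'. destruct E1'; lra. }
    assert (df c0 <= df c1) by (apply Hm; lra). lra. }
  intros r1 r2 H1 H2 F1 F2.
  destruct (Rtotal_order r1 r2) as [h|[h|h]]; auto.
  - exfalso. exact (W r1 r2 H1 H2 F1 F2 h).
  - exfalso. exact (W r2 r1 H2 H1 F2 F1 h).
Qed.

Lemma J_decr k d x1 x2 : (4 <= k)%nat -> 0 < x1 -> x1 <= x2 <= 1/2 ->
  (forall x, x1 <= x <= x2 -> x^(k-1) * (d-4) >= 1) -> J k d x2 <= J k d x1.
Proof.
  intros Hk H1 H2 HC.
  rewrite !J_exp by (auto; lra).
  assert (- lnJ k d x1 <= - lnJ k d x2).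
  { apply (mono_deriv (fun x => - lnJ k d x) (fun x => - lnJd k d x)). lra.
    - intros x Hx. apply (is_derive_opp (lnJ k d)). apply lnJ_deriv; auto; lra.
    - intros x Hx. pose proof (lnJd_neg k d x Hk ltac:(lra) (HC x Hx)). lra. }
  destruct (Req_dec (lnJ k d x2) (lnJ k d x1)) as [h|h].
  - rewrite h. lra.
  - left. apply exp_increasing. lra.
Qed.

Lemma Gd_mono k d x1 x2 : (4 <= k)%nat -> 1 <= d -> 0 < x1 -> x1 <= x2 <= 1/2 ->
  (forall x, x1 <= x <= x2 -> x^(k-1) * (d-4) >= 1) -> Gd k d x1 <= Gd k d x2.
Proof.
  intros Hk Hd H1 H2 HC. unfold Gd.
  pose proof (J_decr k d x1 x2 Hk H1 H2 HC).
  assert (0 <= INR (k-1)) by apply pos_INR.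
  assert (1/(1-x1)^2 <= 1/(1-x2)^2).
  { unfold Rdiv. rewrite !Rmult_1_l. apply Rinv_le_contravar. nra.
    apply pow_incr. lra. }
  assert ((d-1) * INR (k-1) * J k d x2 <= (d-1) * INR (k-1) * J k d x1).
  { apply Rmult_le_compat_l. nra. auto. }
  lra.
Qed.

Lemma w_bounds k d x : (4 <= k)%nat -> 1 < d -> 0 < x <= 1/2 ->
  0 < exp ((d-1) * ln (hatPsi k x)) < 1.
Proof.
  intros Hk Hd Hx. pose proof (hatPsi_pos k x Hk Hx).
  split. apply exp_pos.
  assert (ln (hatPsi k x) < 0). { rewrite <- ln_1. apply ln_increasing; lra. }
  assert (Hn : (d-1) * ln (hatPsi k x) < 0) by nra.
  pose proof (exp_increasing _ _ Hn). rewrite exp_0 in H1. exact H1.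
Qed.

Lemma Psi_iff k d x : (4 <= k)%nat -> 1 < d -> 0 < x <= 1/2 ->
  (Psi k d x = x <-> G k d x = 0).
Proof.
  intros Hk Hd Hx. pose proof (w_bounds k d x Hk Hd Hx).
  unfold Psi, dotPsi, G, Rpower.
  set (w := exp ((d-1) * ln (hatPsi k x))) in *.
  split; intro E.
  - assert (1 - w = x * (2 - w)).
    { rewrite <- E. field. lra. }
    assert (w = (1-2*x)/(1-x)). { apply Rmult_eq_reg_r with (1-x). 2: lra.
      unfold Rdiv. rewrite Rmult_assoc, Rinv_l by lra. lra. }
    lra.
  - assert (w = (1-2*x)/(1-x)) by lra.
    rewrite H0. field. split; lra.
Qed.

Lemma G_half k d : (4 <= k)%nat -> 1 < d -> G k d (1/2) > 0.
Proof.
  intros Hk Hd. pose proof (w_bounds k d (1/2) Hk Hd ltac:(lra)).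
  unfold G. replace ((1 - 2*(1/2))/(1-1/2)) with 0 by field. lra.
Qed.

Lemma G_cont k d x : (4 <= k)%nat -> 0 < x <= 1/2 -> continuity_pt (G k d) x.
Proof. intros. apply (deriv_cont _ _ (Gd k d x)). apply G_deriv; auto. Qed.

Lemma aa_lt k : aa k < 1/2.
Proof. unfold aa. assert (0 < 1/2^k) by (apply Rdiv_lt_0_compat; [lra| apply pow_lt; lra]). lra. Qed.

Definition good (k : nat) (d : R) : Prop :=
  (4 <= k)%nat /\ 4 < d /\ G k d (aa k) < 0 /\ (aa k)^(k-1) * (d - 4) >= 1.

Lemma good_C1 k d x : good k d -> aa k <= x <= 1/2 -> x^(k-1) * (d-4) >= 1.
Proof.
  intros [Hk [Hd [HG HC]]] Hx. pose proof (aa_ge k Hk). pose proof (aa_lt k).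
  assert (aa k ^ (k-1) <= x^(k-1)) by (apply pow_incr; lra).
  nra.
Qed.

Lemma good_exists k d : good k d -> exists r, aa k <= r <= 1/2 /\ G k d r = 0.
Proof.
  intros Hg. pose proof Hg as [Hk [Hd [HG HC]]]. pose proof (aa_ge k Hk). pose proof (aa_lt k).
  destruct (Ranalysis5.IVT_interv (G k d) (aa k) (1/2)) as [r [Hr Er]].
  - intros x Hx. apply G_cont; auto; lra.
  - lra.
  - exact HG.
  - apply G_half; auto; lra.
  - exists r. auto.
Qed.

Lemma good_unique k d : good k d -> forall r1 r2, aa k <= r1 <= 1/2 -> aa k <= r2 <= 1/2 ->
  G k d r1 = 0 -> G k d r2 = 0 -> r1 = r2.
Proof.
  intros Hg. pose proof Hg as [Hk [Hd [HG HC]]]. pose proof (aa_ge k Hk). pose proof (aa_lt k).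
  apply (uniq_root (G k d) (Gd k d) (aa k) (1/2)); auto.
  - intros x Hx. apply G_deriv; auto; lra.
  - intros x y H1 H2 H3. apply Gd_mono; auto; try lra.
    intros z Hz. apply good_C1; auto; lra.
Qed.

Lemma good_fp k d : good k d -> fp_spec k d (xkd k d).
Proof.
  intros Hg. pose proof Hg as [Hk [Hd [HG HC]]]. pose proof (aa_ge k Hk). pose proof (aa_lt k).
  unfold xkd. apply epsilon_spec.
  destruct (good_exists k d Hg) as [r [Hr Er]].
  exists r. unfold fp_spec. split.
  - unfold aa in Hr. lra.
  - apply Psi_iff; auto; lra.
Qed.

Lemma good_xkd k d : good k d -> aa k <= xkd k d <= 1/2 /\ G k d (xkd k d) = 0.
Proof.
  intros Hg. pose proof Hg as [Hk [Hd [HG HC]]]. pose proof (aa_ge k Hk). pose proof (aa_lt k).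
  destruct (good_fp k d Hg) as [Hr E].
  assert (aa k <= xkd k d <= 1/2) by (unfold aa; lra).
  split; auto. apply Psi_iff; auto; lra.
Qed.

Lemma good_neg k d x : good k d -> aa k <= x < xkd k d -> G k d x < 0.
Proof.
  intros Hg Hx. pose proof Hg as [Hk [Hd [HG HC]]]. pose proof (aa_ge k Hk). pose proof (aa_lt k).
  destruct (good_xkd k d Hg) as [Hr Er].
  destruct (Rlt_le_dec (G k d x) 0) as [h|h]; auto. exfalso.
  destruct (Req_dec (G k d x) 0) as [h0|h0].
  - pose proof (good_unique k d Hg x (xkd k d) ltac:(lra) Hr h0 Er). lra.
  - destruct (Ranalysis5.IVT_interv (G k d) (aa k) x) as [r [Hr2 Er2]].
    + intros z Hz. apply G_cont; auto; lra.
    + destruct (Req_dec (aa k) x) as [e|e]. subst. lra. lra.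
    + exact HG.
    + lra.
    + pose proof (good_unique k d Hg r (xkd k d) ltac:(lra) Hr Er2 Er). lra.
Qed.

Lemma good_pos k d x : good k d -> xkd k d < x <= 1/2 -> G k d x > 0.
Proof.
  intros Hg Hx. pose proof Hg as [Hk [Hd [HG HC]]]. pose proof (aa_ge k Hk). pose proof (aa_lt k).
  destruct (good_xkd k d Hg) as [Hr Er].
  destruct (Rlt_le_dec 0 (G k d x) ) as [h|h]; auto. exfalso.
  destruct (Req_dec (G k d x) 0) as [h0|h0].
  - pose proof (good_unique k d Hg x (xkd k d) ltac:(lra) Hr h0 Er). lra.
  - destruct (Ranalysis5.IVT_interv (G k d) x (1/2)) as [r [Hr2 Er2]].
    + intros z Hz. apply G_cont; auto; lra.
    + destruct (Req_dec x (1/2)) as [e|e]. subst. pose proof (G_half k d Hk ltac:(lra)). lra. lra.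
    + lra.
    + apply G_half; auto; lra.
    + pose proof (good_unique k d Hg r (xkd k d) ltac:(lra) Hr Er2 Er). lra.
Qed.

Lemma good_left k d x : good k d -> aa k <= x <= 1/2 -> G k d x < 0 -> x < xkd k d.
Proof.
  intros Hg Hx HGx. destruct (good_xkd k d Hg) as [Hr Er].
  destruct (Rlt_le_dec x (xkd k d)) as [h|h]; auto.
  destruct (Req_dec x (xkd k d)) as [e|e]. rewrite e in HGx. lra.
  pose proof (good_pos k d x Hg ltac:(lra)). lra.
Qed.

Lemma good_right k d x : good k d -> aa k <= x <= 1/2 -> G k d x > 0 -> xkd k d < x.
Proof.
  intros Hg Hx HGx. destruct (good_xkd k d Hg) as [Hr Er].
  destruct (Rlt_le_dec (xkd k d) x) as [h|h]; auto.
  destruct (Req_dec x (xkd k d)) as [e|e]. rewrite e in HGx. lra.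
  pose proof (good_neg k d x Hg ltac:(lra)). lra.
Qed.

Lemma cont_ed f x : continuity_pt f x -> forall eps, 0 < eps ->
  exists delta, 0 < delta /\ forall y, Rabs (y - x) < delta -> Rabs (f y - f x) < eps.
Proof.
  intros H eps Heps. unfold continuity_pt, continue_in, limit1_in, limit_in in H.
  destruct (H eps Heps) as [alp [Halp H']]. exists alp. split; auto.
  intros y Hy. destruct (Req_dec y x) as [e|e].
  - subst. rewrite Rminus_diag, Rabs_R0. lra.
  - apply H'. split. unfold D_x, no_cond. split; auto. simpl. unfold R_dist. auto.
Qed.

Lemma exd_cont f x : ex_derive f x -> continuity_pt f x.
Proof. intros [l H]. exact (deriv_cont f x l H). Qed.

Lemma G_cont_d k x d0 : continuity_pt (fun d => G k d x) d0.
Proof.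
  apply exd_cont. unfold G. auto_derive. auto.
Qed.

Lemma sign_persist_neg f x : continuity_pt f x -> f x < 0 ->
  exists delta, 0 < delta /\ forall y, Rabs (y - x) < delta -> f y < 0.
Proof.
  intros Hc Hn. destruct (cont_ed f x Hc (- f x) ltac:(lra)) as [dl [Hdl H]].
  exists dl. split; auto. intros y Hy. specialize (H y Hy).
  apply Rabs_def2 in H. lra.
Qed.

Lemma sign_persist_pos f x : continuity_pt f x -> f x > 0 ->
  exists delta, 0 < delta /\ forall y, Rabs (y - x) < delta -> f y > 0.
Proof.
  intros Hc Hn. destruct (cont_ed f x Hc (f x) ltac:(lra)) as [dl [Hdl H]].
  exists dl. split; auto. intros y Hy. specialize (H y Hy).
  apply Rabs_def2 in H. lra.
Qed.

Lemma xkd_cont k lo hi : (forall d, lo <= d <= hi -> good k d) ->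
  continuous_on_closed (xkd k) lo hi.
Proof.
  intros Hgood d0 Hd0 eps Heps.
  pose proof (Hgood d0 Hd0) as Hg. pose proof Hg as [Hk [Hd [HG HC]]].
  pose proof (aa_ge k Hk). pose proof (aa_lt k).
  destruct (good_xkd k d0 Hg) as [Hr Er].
  
  set (xm := Rmax (aa k) ((xkd k d0) - eps/2)). set (xp := Rmin (1/2) ((xkd k d0) + eps/2)).
  assert (Hxm : G k d0 xm < 0 /\ aa k <= xm <= 1/2 /\ (xkd k d0) - eps/2 <= xm).
  { unfold xm. destruct (Rle_dec ((xkd k d0) - eps/2) (aa k)).
    - rewrite Rmax_left by lra. split; auto. lra.
    - rewrite Rmax_right by lra. split. apply good_neg; auto. lra.
      lra. }
  assert (Hxp : G k d0 xp > 0 /\ aa k <= xp <= 1/2 /\ xp <= (xkd k d0) + eps/2).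
  { unfold xp. destruct (Rle_dec (1/2) ((xkd k d0) + eps/2)).
    - rewrite Rmin_left by lra. split. apply G_half; auto; lra. lra.
    - rewrite Rmin_right by lra. split. apply good_pos; auto. lra.
      lra. }
  destruct (sign_persist_neg (fun d => G k d xm) d0 (G_cont_d k xm d0) (proj1 Hxm)) as [d1 [Hd1 H1]].
  destruct (sign_persist_pos (fun d => G k d xp) d0 (G_cont_d k xp d0) (proj1 Hxp)) as [d2 [Hd2 H2]].
  exists (Rmin d1 d2). split. apply Rmin_pos; auto.
  intros d Hdr Hdd.
  assert (Ha1 : Rabs (d - d0) < d1) by (eapply Rlt_le_trans; [exact Hdd | apply Rmin_l]).
  assert (Ha2 : Rabs (d - d0) < d2) by (eapply Rlt_le_trans; [exact Hdd | apply Rmin_r]).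
  pose proof (Hgood d Hdr) as Hg'.
  pose proof (good_left k d xm Hg' (proj1 (proj2 Hxm)) (H1 d Ha1)).
  pose proof (good_right k d xp Hg' (proj1 (proj2 Hxp)) (H2 d Ha2)).
  apply Rabs_def1; lra.
Qed.

Lemma cc_ext f g lo hi : (forall d, lo <= d <= hi -> f d = g d) ->
  continuous_on_closed g lo hi -> continuous_on_closed f lo hi.
Proof.
  intros E Hg d0 Hd0 eps Heps. destruct (Hg d0 Hd0 eps Heps) as [dl [Hdl H]].
  exists dl. split; auto. intros d Hd Hdd. rewrite !E by auto. auto.
Qed.

Lemma cc_plus f g lo hi : continuous_on_closed f lo hi -> continuous_on_closed g lo hi ->
  continuous_on_closed (fun d => f d + g d) lo hi.
Proof.
  intros Hf Hg d0 Hd0 eps Heps.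
  destruct (Hf d0 Hd0 (eps/2) ltac:(lra)) as [d1 [Hd1 H1]].
  destruct (Hg d0 Hd0 (eps/2) ltac:(lra)) as [d2 [Hd2 H2]].
  exists (Rmin d1 d2). split. apply Rmin_pos; auto.
  intros d Hd Hdd.
  assert (Rabs (d - d0) < d1) by (eapply Rlt_le_trans; [exact Hdd | apply Rmin_l]).
  assert (Rabs (d - d0) < d2) by (eapply Rlt_le_trans; [exact Hdd | apply Rmin_r]).
  specialize (H1 d Hd H). specialize (H2 d Hd H0).
  replace (f d + g d - (f d0 + g d0)) with ((f d - f d0) + (g d - g d0)) by ring.
  eapply Rle_lt_trans. apply Rabs_triang. lra.
Qed.

Lemma cc_mult f g lo hi : continuous_on_closed f lo hi -> continuous_on_closed g lo hi ->
  continuous_on_closed (fun d => f d * g d) lo hi.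
Proof.
  intros Hf Hg d0 Hd0 eps Heps.
  set (A := Rabs (f d0) + 1). set (B := Rabs (g d0) + 1).
  assert (HA : 0 < A) by (unfold A; pose proof (Rabs_pos (f d0)); lra).
  assert (HB : 0 < B) by (unfold B; pose proof (Rabs_pos (g d0)); lra).
  set (e1 := Rmin 1 (eps / (2 * B))). set (e2 := eps / (2 * A)).
  assert (He1 : 0 < e1) by (apply Rmin_pos; [lra | apply Rdiv_lt_0_compat; lra]).
  assert (He2 : 0 < e2) by (apply Rdiv_lt_0_compat; lra).
  destruct (Hf d0 Hd0 e1 He1) as [d1 [Hd1 H1]].
  destruct (Hg d0 Hd0 e2 He2) as [d2 [Hd2 H2]].
  exists (Rmin d1 d2). split. apply Rmin_pos; auto.
  intros d Hd Hdd.
  assert (Rabs (d - d0) < d1) by (eapply Rlt_le_trans; [exact Hdd | apply Rmin_l]).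
  assert (Rabs (d - d0) < d2) by (eapply Rlt_le_trans; [exact Hdd | apply Rmin_r]).
  specialize (H1 d Hd H). specialize (H2 d Hd H0).
  replace (f d * g d - f d0 * g d0) with (f d * (g d - g d0) + (f d - f d0) * g d0) by ring.
  eapply Rle_lt_trans. apply Rabs_triang. rewrite !Rabs_mult.
  assert (Rabs (f d) <= A).
  { unfold A. replace (f d) with ((f d - f d0) + f d0) by ring.
    eapply Rle_trans. apply Rabs_triang. assert (e1 <= 1) by apply Rmin_l. lra. }
  assert (Rabs (f d) * Rabs (g d - g d0) < A * e2).
  { apply Rle_lt_trans with (A * Rabs (g d - g d0)).
    apply Rmult_le_compat_r. apply Rabs_pos. lra.
    apply Rmult_lt_compat_l; lra. }
  assert (Rabs (f d - f d0) * Rabs (g d0) <= e1 * B).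
  { apply Rmult_le_compat; try apply Rabs_pos; unfold B; lra. }
  assert (e2 * A = eps/2) by (unfold e2; field; lra).
  assert (e1 * B <= eps/2).
  { assert (e1 <= eps / (2*B)) by apply Rmin_r.
    apply Rle_trans with (eps/(2*B) * B). apply Rmult_le_compat_r; lra.
    right. field. lra. }
  lra.
Qed.

Lemma cc_id lo hi : continuous_on_closed (fun d => d) lo hi.
Proof.
  intros d0 Hd0 eps Heps. exists eps. split; auto.
Qed.

Lemma cc_comp r P lo hi A B : continuous_on_closed r lo hi ->
  (forall d, lo <= d <= hi -> A <= r d <= B) ->
  (forall x, A <= x <= B -> continuity_pt P x) ->
  continuous_on_closed (fun d => P (r d)) lo hi.
Proof.
  intros Hr HAB HP d0 Hd0 eps Heps.
  destruct (cont_ed P (r d0) (HP _ (HAB d0 Hd0)) eps Heps) as [e [He H]].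
  destruct (Hr d0 Hd0 e He) as [dl [Hdl H']].
  exists dl. split; auto.
Qed.

Definition Pp (k : nat) (x : R) := - ln (1 - x) + ln (1 - 2 * x^k) - ln (1 - x^(k-1)).
Definition Qq (k : nat) (x : R) := - (1 - / INR k) * ln (1 - 2 * x^k) + ln (1 - x^(k-1)).

Lemma Phi_PQ k d x : d <> 0 -> Phi k d x = Pp k x + d * Qq k x.
Proof.
  intros Hd. unfold Phi, Pp, Qq.
  assert (E : d * (1 - / INR k - / d) = d * (1 - / INR k) - d * / d) by ring.
  rewrite Rinv_r in E by auto. rewrite E. ring.
Qed.

Lemma xk_small k x : (4 <= k)%nat -> 0 < x <= 1/2 -> 0 < 2 * x^k <= 1/8.
Proof.
  intros Hk Hx. pose proof (y_bounds k x Hk Hx). rewrite (pow_S1 x k) by lia.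
  split. apply Rmult_lt_0_compat. lra. apply Rmult_lt_0_compat; lra. nra.
Qed.

Lemma PQ_cont k x : (4 <= k)%nat -> 0 < x <= 1/2 ->
  continuity_pt (Pp k) x /\ continuity_pt (Qq k) x.
Proof.
  intros Hk Hx. pose proof (y_bounds k x Hk Hx). pose proof (xk_small k x Hk Hx).
  split; apply exd_cont; unfold Pp, Qq; auto_derive; repeat split; lra.
Qed.

Lemma Phistar_cont k lo hi : (4 <= k)%nat -> 0 < lo -> (forall d, lo <= d <= hi -> good k d) ->
  continuous_on_closed (Phistar k) lo hi.
Proof.
  intros Hk Hlo Hgood.
  apply cc_ext with (fun d => Pp k (xkd k d) + (fun d => d) d * Qq k (xkd k d)).
  { intros d Hd. unfold Phistar. apply Phi_PQ. lra. }
  pose proof (aa_ge k Hk).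
  assert (HR : forall d, lo <= d <= hi -> aa k <= xkd k d <= 1/2).
  { intros d Hd. apply good_xkd. auto. }
  apply cc_plus.
  - apply (cc_comp (xkd k) (Pp k) lo hi (aa k) (1/2)); auto.
    apply xkd_cont; auto. intros x Hx. apply PQ_cont; auto; lra.
  - apply cc_mult. apply cc_id.
    apply (cc_comp (xkd k) (Qq k) lo hi (aa k) (1/2)); auto.
    apply xkd_cont; auto. intros x Hx. apply PQ_cont; auto; lra.
Qed.

Definition Phid (k : nat) (d x : R) : R :=
  1/(1-x) + d*(1 - /INR k - /d) * (2 * (INR k * x^(k-1))) / (1 - 2*x^k)
  - (d-1) * (INR (k-1) * x^(k-2)) / (1 - x^(k-1)).

Lemma Phi_deriv k d x : (4 <= k)%nat -> 0 < x <= 1/2 -> is_derive (Phi k d) x (Phid k d x).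
Proof.
  intros Hk Hx. pose proof (y_bounds k x Hk Hx). pose proof (xk_small k x Hk Hx).
  unfold Phi, Phid. auto_derive.
  - repeat split; lra.
  - replace (Init.Nat.pred (k-1)) with (k-2)%nat by lia.
    replace (Init.Nat.pred k) with (k-1)%nat by lia.
    set (c := d * (1 - / INR k - / d)). field. repeat split; lra.
Qed.

Lemma frac_le a A b B : 0 <= a <= A -> 0 < B <= b -> a / b <= A / B.
Proof.
  intros Ha Hb. unfold Rdiv. apply Rmult_le_compat; try lra.
  apply Rlt_le, Rinv_0_lt_compat; lra.
  apply Rinv_le_contravar; lra.
Qed.

Lemma Phid_lower k d x w1 w2 : (4 <= k)%nat -> 1 < d -> 0 < w1 -> w1 <= x <= w2 -> w2 <= 1/2 ->
  Phid k d x >= 1/(1-w1) - 2*w2*w2^(k-2)/(1 - 2*w2^2*w2^(k-2))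
     - (d-1)*INR (k-1) * w2^(k-2) * (1-2*w1) / ((1 - 2*w2^2*w2^(k-2)) * (1 - w2*w2^(k-2))).
Proof.
  intros Hk Hd Hw1 Hx Hw2.
  pose proof (y_bounds k x Hk ltac:(lra)) as Hy. pose proof (xk_small k x Hk ltac:(lra)) as Hxk.
  pose proof (y_bounds k w2 Hk ltac:(lra)) as Hy2. pose proof (xk_small k w2 Hk ltac:(lra)) as Hxk2.
  assert (HK : INR k = INR (k-1) + 1).
  { replace k with (S (k-1)) at 1 by lia. rewrite S_INR. reflexivity. }
  assert (HK1 : 3 <= INR (k-1)).
  { replace 3 with (INR 3) by (simpl; lra). apply le_INR. lia. }
  assert (Ek : x^k = x^2 * x^(k-2)).
  { replace k with (2 + (k-2))%nat at 1 by lia. apply pow_add. }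
  assert (Ek2 : w2^k = w2^2 * w2^(k-2)).
  { replace k with (2 + (k-2))%nat at 1 by lia. apply pow_add. }
  rewrite (pow_S2 x k) in Hy by lia. rewrite Ek in Hxk.
  rewrite (pow_S2 w2 k) in Hy2 by lia. rewrite Ek2 in Hxk2.
  assert (Hp : 0 < x^(k-2) <= w2^(k-2)).
  { split. apply pow_lt; lra. apply pow_incr; lra. }
  set (p := x^(k-2)) in *. set (P := w2^(k-2)) in *.
  set (D := (d-1) * INR (k-1)).
  assert (E : Phid k d x = 1/(1-x) - 2*x*p/(1 - 2*x^2*p) - D * p * (1-2*x) / ((1-2*x^2*p)*(1-x*p))).
  { unfold Phid. rewrite Ek, (pow_S2 x k) by lia. fold p. rewrite HK. unfold D.
    field. repeat split; try lra. }
  rewrite E.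
  assert (T1 : 1/(1-w1) <= 1/(1-x)).
  { apply frac_le; lra. }
  assert (T2 : 2*x*p/(1 - 2*x^2*p) <= 2*w2*P/(1 - 2*w2^2*P)).
  { apply frac_le. split. nra. apply Rmult_le_compat; nra.
    split. lra. assert (x^2 <= w2^2) by (apply pow_incr; lra).
    assert (x^2 * p <= w2^2 * P) by (apply Rmult_le_compat; nra). lra. }
  assert (HD : 0 <= D) by (unfold D; nra).
  assert (T3 : D * p * (1-2*x) / ((1-2*x^2*p)*(1-x*p)) <= D * P * (1-2*w1) / ((1 - 2*w2^2*P) * (1 - w2*P))).
  { assert (x^2 <= w2^2) by (apply pow_incr; lra).
    assert (0 <= D * p) by nra.
    assert (D * p <= D * P) by (apply Rmult_le_compat_l; lra).
    apply frac_le. split. apply Rmult_le_pos. nra. lra.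
    apply Rmult_le_compat; nra.
    assert (x^2 * p <= w2^2 * P) by (apply Rmult_le_compat; nra).
    assert (x * p <= w2 * P) by (apply Rmult_le_compat; nra).
    split. apply Rmult_lt_0_compat; lra. apply Rmult_le_compat; lra. }
  unfold D in *. lra.
Qed.

Lemma sign_lb k d x1 : good k d -> aa k <= x1 <= 1/2 -> G k d x1 < 0 ->
  (forall x, x1 <= x <= 1/2 -> Phid k d x > 0) -> Phi k d x1 > 0 -> Phistar k d > 0.
Proof.
  intros Hg Hx1 HG Hd Hp. pose proof Hg as [Hk _]. pose proof (aa_ge k Hk).
  destruct (good_xkd k d Hg) as [Hr Er].
  pose proof (good_left k d x1 Hg Hx1 HG).
  destruct (mvt (Phi k d) (Phid k d) x1 (xkd k d)) as [c [Hc Ec]]; auto.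
  - intros x Hx. apply Phi_deriv; auto; lra.
  - unfold Phistar. assert (Phid k d c > 0) by (apply Hd; lra).
    assert (Phid k d c * (xkd k d - x1) > 0) by (apply Rmult_gt_0_compat; lra). lra.
Qed.

Lemma sign_ub k d x1 : good k d -> aa k <= x1 <= 1/2 -> G k d x1 < 0 ->
  (forall x, x1 <= x <= 1/2 -> Phid k d x > 0) -> Phi k d (1/2) < 0 -> Phistar k d < 0.
Proof.
  intros Hg Hx1 HG Hd Hp. pose proof Hg as [Hk _]. pose proof (aa_ge k Hk).
  destruct (good_xkd k d Hg) as [Hr Er].
  pose proof (good_left k d x1 Hg Hx1 HG).
  unfold Phistar. destruct (Req_dec (xkd k d) (1/2)) as [e|e]. rewrite e. auto.
  destruct (mvt (Phi k d) (Phid k d) (xkd k d) (1/2)) as [c [Hc Ec]]. lra.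
  - intros x Hx. apply Phi_deriv; auto; lra.
  - assert (Phid k d c > 0) by (apply Hd; lra).
    assert (Phid k d c * (1/2 - xkd k d) > 0) by (apply Rmult_gt_0_compat; lra). lra.
Qed.

Lemma lnv_upper y : 0 < y <= 1/8 -> ln ((1-2*y)/(1-y)) <= - y - y^2.
Proof.
  intros Hy. rewrite ln_div by lra.
  pose proof (ln1m_le (2*y) ltac:(lra)). pose proof (ln1m_ge y ltac:(lra)).
  assert (y^3 <= y^2 * (1/8)) by (simpl; nra).
  assert ((2*y)^2 = 4*y^2) by ring. assert (0 <= y^2) by nra.
  lra.
Qed.

Lemma G_neg_suff k d x : (4 <= k)%nat -> 0 < x < 1/2 ->
  (d-1) * ln (hatPsi k x) < ln ((1-2*x)/(1-x)) -> G k d x < 0.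
Proof.
  intros Hk Hx H. unfold G.
  apply exp_increasing in H. rewrite exp_ln in H.
  lra. apply Rdiv_lt_0_compat; lra.
Qed.

Lemma ln1p_le t : -1 < t -> ln (1 + t) <= t.
Proof. intros. pose proof (ln_le_lin (1+t) ltac:(lra)). lra. Qed.

Lemma ln_ge_inv t : 0 < t -> 1 - /t <= ln t.
Proof.
  intros. rewrite <- (Rinv_inv t) at 2. rewrite ln_Rinv by (apply Rinv_0_lt_compat; lra).
  pose proof (ln_le_lin (/t) ltac:(apply Rinv_0_lt_compat; lra)). lra.
Qed.

Lemma Phi_lower k d x : (4 <= k)%nat -> 0 < x <= 1/2 -> 1 <= d ->
  0 <= d * (1 - / INR k - / d) ->
  Phi k d x >= - ln (1 - x) + d * (1 - / INR k - / d) * (2*x^k + (2*x^k)^2/2)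
     - (d-1) * (x^(k-1) + (x^(k-1))^2/2 + 2/3 * (x^(k-1))^3).
Proof.
  intros Hk Hx Hd Hc. pose proof (y_bounds k x Hk Hx). pose proof (xk_small k x Hk Hx).
  unfold Phi.
  pose proof (ln1m_le (2*x^k) ltac:(lra)). pose proof (ln1m_ge (x^(k-1)) ltac:(lra)).
  set (c := d * (1 - / INR k - / d)) in *.
  assert (c * ln (1 - 2 * x^k) <= c * (- (2*x^k) - (2*x^k)^2/2)) by (apply Rmult_le_compat_l; lra).
  assert ((d-1) * (- x^(k-1) - (x^(k-1))^2/2 - 2/3*(x^(k-1))^3) <= (d-1) * ln (1 - x^(k-1)))
    by (apply Rmult_le_compat_l; lra).
  lra.
Qed.

Lemma c_eq k d : (1 <= k)%nat -> d <> 0 -> d * (1 - / INR k - / d) = d - d / INR k - 1.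
Proof.
  intros Hk Hd. assert (INR k <> 0). { apply not_0_INR. lia. }
  field. auto.
Qed.

Lemma half_pow_km1 k : (1 <= k)%nat -> (1/2)^(k-1) = 2 / 2^k.
Proof.
  intros Hk. rewrite half_pow. rewrite (pow_S1 2 k) by lia.
  field. apply pow_nonzero. lra.
Qed.

Lemma pow_km1_2 k : (1 <= k)%nat -> 2^(k-1) = 2^k / 2.
Proof. intros Hk. rewrite (pow_S1 2 k) by lia. field. Qed.

Lemma Phi_ub_half k : (4 <= k)%nat -> Phi k (d_ubd k) (1/2) < 0.
Proof.
  intros Hk. pose proof (N_ge16 k Hk). pose proof ln2_bounds as HL.
  set (N := 2^k) in *.
  assert (HK : 4 <= INR k) by (replace 4 with (INR 4) by (simpl; lra); apply le_INR; lia).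
  unfold Phi, d_ubd.
  rewrite pow_km1_2 by lia. fold N.
  assert (E1 : 2 * (1/2)^k = 2 / N) by (unfold N; rewrite half_pow; field; apply pow_nonzero; lra).
  rewrite E1, half_pow_km1 by lia. fold N.
  replace (1 - 1/2) with (/2) by field. rewrite ln_Rinv by lra.
  set (L := ln 2) in *.
  assert (Hd0 : 0 < N / 2 * INR k * L).
  { apply Rmult_lt_0_compat. apply Rmult_lt_0_compat; lra. lra. }
  rewrite c_eq by (lia || lra).
  replace (- - L - (N / 2 * INR k * L - N / 2 * INR k * L / INR k - 1) * ln (1 - 2 / N) +
    (N / 2 * INR k * L - 1) * ln (1 - 2 / N)) with (L + (N/2 * L) * ln (1 - 2/N))
    by (field; lra).
  pose proof (ln1m_le (2/N)). 
  assert (0 < 2/N <= 1/8) by (split; [apply Rdiv_lt_0_compat; lra | apply Rmult_le_reg_r with N; [lra| unfold Rdiv; rewrite Rmult_assoc, Rinv_l; lra]]).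
  specialize (H0 ltac:(lra)).
  assert (N/2 * L * ln (1 - 2/N) <= N/2 * L * (- (2/N) - (2/N)^2/2)) by (apply Rmult_le_compat_l; nra).
  assert (N/2 * L * (- (2/N) - (2/N)^2/2) = - L - L/N) by (field; lra).
  assert (0 < L/N) by (apply Rdiv_lt_0_compat; lra).
  lra.
Qed.

Lemma G_mono_d k d1 d2 x : (4 <= k)%nat -> 0 < x <= 1/2 -> d1 <= d2 -> G k d2 x <= G k d1 x.
Proof.
  intros Hk Hx Hd. pose proof (hatPsi_pos k x Hk Hx). unfold G.
  assert (ln (hatPsi k x) < 0). { rewrite <- ln_1. apply ln_increasing; lra. }
  assert ((d2-1) * ln (hatPsi k x) <= (d1-1) * ln (hatPsi k x)) by nra.
  destruct (Req_dec ((d2-1) * ln (hatPsi k x)) ((d1-1) * ln (hatPsi k x))) as [e|e].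
  rewrite e. lra.
  assert (exp ((d2-1) * ln (hatPsi k x)) < exp ((d1-1) * ln (hatPsi k x))) by (apply exp_increasing; lra).
  lra.
Qed.

Lemma lb4 : d_lbd 4 = 167/10.
Proof. unfold d_lbd. simpl. lra. Qed.

Lemma ub4 : d_ubd 4 = 32 * ln 2.
Proof. unfold d_ubd. simpl. lra. Qed.

Lemma aa4 : aa 4 = 7/16.
Proof. unfold aa. simpl. lra. Qed.

Lemma ln32_bounds : Aser (1/5) <= ln (3/2) <= Aser (1/5) + 2*(1/5)^9/(9*(1-(1/5)^2)).
Proof.
  pose proof (ln_bounds_ge1 (3/2) ltac:(lra)).
  replace ((3/2-1)/(3/2+1)) with (1/5) in H by field. exact H.
Qed.

Lemma hatPsi_val k x : hatPsi k x = (1 - 2*x^(k-1))/(1 - x^(k-1)).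
Proof. reflexivity. Qed.

Lemma E1_k4 : G 4 (167/10) (7/16) < 0.
Proof.
  apply G_neg_suff. lia. lra.
  rewrite hatPsi_val. simpl (4-1)%nat.
  replace ((1 - 2 * (7/16)^3) / (1 - (7/16)^3)) with (/ (3753/3410)) by (simpl; field).
  rewrite ln_Rinv by lra.
  replace ((1 - 2 * (7/16)) / (1 - 7/16)) with (/ (2 * (3/2) * (3/2))) by field.
  rewrite ln_Rinv by lra. rewrite !ln_mult by lra.
  pose proof (ln_bounds_ge1 (3753/3410) ltac:(lra)) as H1.
  replace ((3753/3410-1)/(3753/3410+1)) with (343/7163) in H1 by field.
  pose proof ln32_bounds. pose proof ln2_bounds.
  unfold Aser in *. simpl in *. lra.
Qed.

Lemma C1_k4 d : 167/10 <= d -> (aa 4)^(4-1) * (d - 4) >= 1.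
Proof. intros. rewrite aa4. simpl. lra. Qed.

Lemma Phi_lb_k4 : Phi 4 (167/10) (7/16) > 0.
Proof.
  pose proof (Phi_lower 4 (167/10) (7/16) ltac:(lia) ltac:(lra) ltac:(lra)) as H.
  replace (INR 4) with 4 in H by (simpl; lra).
  replace (167/10 * (1 - /4 - / (167/10))) with (461/40) in H by field.
  assert (Hc : 0 <= 461/40) by lra. specialize (H Hc).
  replace (1 - 7/16) with (/ (2 * 2 / ((3/2) * (3/2)))) in H by field.
  rewrite ln_Rinv in H by lra.
  rewrite ln_div, !ln_mult in H by lra.
  pose proof ln32_bounds. pose proof ln2_bounds.
  unfold Aser in *. simpl in *. lra.
Qed.

Lemma Phid_pos_generic k d x w1 w2 : (4 <= k)%nat -> 1 < d -> 0 < w1 -> w1 <= x <= w2 -> w2 <= 1/2 ->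
  1/(1-w1) - 2*w2*w2^(k-2)/(1 - 2*w2^2*w2^(k-2))
     - (d-1)*INR (k-1) * w2^(k-2) * (1-2*w1) / ((1 - 2*w2^2*w2^(k-2)) * (1 - w2*w2^(k-2))) > 0 ->
  Phid k d x > 0.
Proof. intros Hk Hd Hw1 Hx Hw2 Hb. pose proof (Phid_lower k d x w1 w2 Hk Hd Hw1 Hx Hw2). lra. Qed.

Lemma Phid_lb_k4 x : 7/16 <= x <= 1/2 -> Phid 4 (167/10) x > 0.
Proof.
  intros Hx.
  destruct (Rle_dec x (29/64)).
  { apply (Phid_pos_generic 4 _ x (7/16) (29/64)); try lia; try lra. simpl. lra. }
  destruct (Rle_dec x (30/64)).
  { apply (Phid_pos_generic 4 _ x (29/64) (30/64)); try lia; try lra. simpl. lra. }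
  destruct (Rle_dec x (31/64)).
  { apply (Phid_pos_generic 4 _ x (30/64) (31/64)); try lia; try lra. simpl. lra. }
  { apply (Phid_pos_generic 4 _ x (31/64) (1/2)); try lia; try lra. simpl. lra. }
Qed.

Lemma G_ub_k4 : G 4 (32 * ln 2) (15/32) < 0.
Proof.
  pose proof ln2_bounds.
  apply G_neg_suff. lia. lra.
  rewrite hatPsi_val. simpl (4-1)%nat.
  pose proof (lnv_upper ((15/32)^3) ltac:(simpl; lra)).
  replace ((1 - 2 * (15/32)) / (1 - 15/32)) with (/ (2 * 2 * 2 * (17/16))) by field.
  rewrite ln_Rinv by lra. rewrite !ln_mult by lra.
  pose proof (ln1p_le (1/16) ltac:(lra)). replace (1 + 1/16) with (17/16) in H1 by field.
  assert (Hl : ln ((1 - 2 * (15/32)^3) / (1 - (15/32)^3)) < 0).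
  { rewrite <- ln_1. apply ln_increasing; simpl; lra. }
  assert ((32 * ln 2 - 1) * ln ((1 - 2 * (15/32)^3) / (1 - (15/32)^3)) <=
          (32 * ln 2 - 1) * (- (15/32)^3 - ((15/32)^3)^2)).
  { apply Rmult_le_compat_l; lra. }
  simpl in *. lra.
Qed.

Lemma Phid_ub_k4 x : 15/32 <= x <= 1/2 -> Phid 4 (32 * ln 2) x > 0.
Proof.
  intros Hx. pose proof ln2_bounds.
  apply (Phid_pos_generic 4 _ x (15/32) (1/2)); try lia; try lra. simpl. lra.
Qed.

Lemma lb5 : d_lbd 5 = 70 * ln 2.
Proof. unfold d_lbd. simpl. lra. Qed.

Lemma ub5 : d_ubd 5 = 80 * ln 2.
Proof. unfold d_ubd. simpl. lra. Qed.

Lemma aa5 : aa 5 = 15/32.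
Proof. unfold aa. simpl. lra. Qed.

Lemma E1_k5 : G 5 (70 * ln 2) (15/32) < 0.
Proof.
  pose proof ln2_bounds.
  apply G_neg_suff. lia. lra.
  rewrite hatPsi_val. simpl (5-1)%nat.
  pose proof (lnv_upper ((15/32)^4) ltac:(simpl; lra)).
  replace ((1 - 2 * (15/32)) / (1 - 15/32)) with (/ (2 * 2 * 2 * (17/16))) by field.
  rewrite ln_Rinv by lra. rewrite !ln_mult by lra.
  pose proof (ln1p_le (1/16) ltac:(lra)). replace (1 + 1/16) with (17/16) in H1 by field.
  assert ((70 * ln 2 - 1) * ln ((1 - 2 * (15/32)^4) / (1 - (15/32)^4)) <=
          (70 * ln 2 - 1) * (- (15/32)^4 - ((15/32)^4)^2)).
  { apply Rmult_le_compat_l; lra. }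
  simpl in *. lra.
Qed.

Lemma C1_k5 d : 70 * ln 2 <= d -> (aa 5)^(5-1) * (d - 4) >= 1.
Proof. intros. pose proof ln2_bounds. rewrite aa5. simpl. lra. Qed.

Lemma Phi_lb_k5 : Phi 5 (70 * ln 2) (15/32) > 0.
Proof.
  pose proof ln2_bounds as HL.
  pose proof (Phi_lower 5 (70 * ln 2) (15/32) ltac:(lia) ltac:(lra) ltac:(lra)) as H.
  replace (INR 5) with 5 in H by (simpl; lra).
  replace (70 * ln 2 * (1 - /5 - / (70 * ln 2))) with (56 * ln 2 - 1) in H by (field; lra).
  assert (Hc : 0 <= 56 * ln 2 - 1) by lra. specialize (H Hc).
  replace (1 - 15/32) with ((17/16) / 2) in H by field.
  rewrite ln_div in H by lra.
  pose proof (ln1p_le (1/16) ltac:(lra)). replace (1 + 1/16) with (17/16) in H0 by field.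
  simpl in *. lra.
Qed.

Lemma Phid_k5 d x : 70 * ln 2 <= d <= 80 * ln 2 -> 15/32 <= x <= 1/2 -> Phid 5 d x > 0.
Proof.
  intros Hd Hx. pose proof ln2_bounds.
  destruct (Rle_dec x (61/128)).
  { apply (Phid_pos_generic 5 _ x (15/32) (61/128)); try lia; try lra. simpl. lra. }
  destruct (Rle_dec x (62/128)).
  { apply (Phid_pos_generic 5 _ x (61/128) (62/128)); try lia; try lra. simpl. lra. }
  destruct (Rle_dec x (63/128)).
  { apply (Phid_pos_generic 5 _ x (62/128) (63/128)); try lia; try lra. simpl. lra. }
  { apply (Phid_pos_generic 5 _ x (63/128) (1/2)); try lia; try lra. simpl. lra. }
Qed.

Lemma Bern_lo t n : 0 <= t <= 1 -> 1 - INR n * t <= (1 - t)^n.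
Proof.
  intros Ht. induction n.
  - simpl. lra.
  - rewrite S_INR. simpl.
    assert (0 <= (1-t)^n) by (apply pow_le; lra).
    destruct (Rle_dec 0 (1 - INR n * t)).
    + assert ((1-t) * (1 - INR n * t) <= (1-t) * (1-t)^n) by (apply Rmult_le_compat_l; lra).
      assert (0 <= INR n) by apply pos_INR. nra.
    + assert (0 <= (1-t) * (1-t)^n) by (apply Rmult_le_pos; lra). nra.
Qed.

Lemma Bern_hi t n : 0 <= t <= 1 -> (1 - t)^n <= 1 - INR n * t + INR n * INR n * t^2 / 2.
Proof.
  intros Ht. induction n.
  - simpl. lra.
  - rewrite S_INR. simpl.
    assert (0 <= INR n) by apply pos_INR.
    assert ((1-t) * (1-t)^n <= (1-t) * (1 - INR n * t + INR n * INR n * t^2 / 2))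
      by (apply Rmult_le_compat_l; lra).
    assert (0 <= INR n * INR n * t * t * t) by (repeat apply Rmult_le_pos; lra).
    simpl in H0. nra.
Qed.

Lemma N_ge_K2 k : (6 <= k)%nat -> 16/9 * INR k ^ 2 <= 2^k.
Proof.
  intros Hk. induction k.
  - lia.
  - destruct (Nat.eq_dec k 5) as [e|e].
    + subst. simpl. lra.
    + assert (6 <= k)%nat by lia. specialize (IHk H).
      rewrite S_INR. simpl. simpl in IHk.
      assert (6 <= INR k) by (replace 6 with (INR 6) by (simpl; lra); apply le_INR; lia).
      nra.
Qed.

Lemma quarter_pow k : (2 <= k)%nat -> (1/2)^(k-2) = 4 / 2^k.
Proof.
  intros Hk. rewrite half_pow.
  replace k with (2 + (k-2))%nat at 2 by lia. rewrite pow_add. simpl.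
  field. apply pow_nonzero. lra.
Qed.

Lemma lnN k : ln (2^k) = INR k * ln 2.
Proof. apply ln_pow. lra. Qed.

Lemma core_E1 K N L : 6 <= K -> 16/9 * K^2 <= N -> 0.693 < L < 0.694 ->
  ((N/2 - 2) * K * L - 1) * ((2/N) * (1 - 2*(K-1)/N)) > (K-2)*L + 2/N.
Proof.
  intros HK HN HL.
  assert (HN0 : 64 <= N) by nra.
  replace (((N/2 - 2) * K * L - 1) * ((2/N) * (1 - 2*(K-1)/N))) with
    (K*L - (4*K*L + 2)/N - 2*K*(K-1)*L/N + (4*K*L+2)*2*(K-1)/N^2) by (field; lra).
  assert (0 <= (4*K*L+2)*2*(K-1)/N^2).
  { apply Rdiv_le_0_compat. nra. nra. }
  assert (2*L*N > 2*K^2*L + 2*K*L + 4) by nra.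
  assert ((4*K*L + 2)/N + 2*K*(K-1)*L/N + 2/N < 2*L).
  { apply Rmult_lt_reg_r with N. lra. field_simplify; try lra; nra. }
  nra.
Qed.

Lemma core_G1 K N L : 6 <= K -> 16/9 * K^2 <= N -> 0.693 < L < 0.694 ->
  ((N/2 - 2) * K * L - 1) * ((2/N) * (1 - (K-1)/N)) > (K-1)*L + 1/N.
Proof.
  intros HK HN HL.
  assert (HN0 : 64 <= N) by nra.
  replace (((N/2 - 2) * K * L - 1) * ((2/N) * (1 - (K-1)/N))) with
    (K*L - (4*K*L + 2)/N - K*(K-1)*L/N + (4*K*L+2)*(K-1)/N^2) by (field; lra).
  assert (0 <= (4*K*L+2)*(K-1)/N^2).
  { apply Rdiv_le_0_compat. nra. nra. }
  assert (L*N > K^2*L + 3*K*L + 3) by nra.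
  assert ((4*K*L + 2)/N + K*(K-1)*L/N + 1/N < L).
  { apply Rmult_lt_reg_r with N. lra. field_simplify; try lra; nra. }
  nra.
Qed.

Lemma core_C1 K N L : 6 <= K -> 16/9 * K^2 <= N -> 0.693 < L < 0.694 ->
  ((2/N) * (1 - 2*(K-1)/N)) * ((N/2 - 2) * K * L - 4) >= 1.
Proof.
  intros HK HN HL.
  assert (HN0 : 64 <= N) by nra.
  replace (((2/N) * (1 - 2*(K-1)/N)) * ((N/2 - 2) * K * L - 4)) with
    (K*L - (4*K*L + 8)/N - 2*K*(K-1)*L/N + (4*K*L+8)*2*(K-1)/N^2) by (field; lra).
  assert (0 <= (4*K*L+8)*2*(K-1)/N^2).
  { apply Rdiv_le_0_compat. nra. nra. }
  assert (Hh : (K*L - 1) * (N - 16/9*K^2) >= 0) by (apply Rle_ge, Rmult_le_pos; nra).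
  assert (Hk1 : K^2*L*(K-6) >= 0).
  { apply Rle_ge. apply Rmult_le_pos. apply Rmult_le_pos. nra. lra. lra. }
  assert (Hk2 : K^2 * (L - 0.693) >= 0) by (apply Rle_ge, Rmult_le_pos; nra).
  assert (Hk3 : K * (K - 6) >= 0) by (apply Rle_ge, Rmult_le_pos; nra).
  assert (Hm : (4*K*L+8) + 2*K*(K-1)*L <= (K*L-1)*N) by nra.
  assert ((4*K*L + 8)/N + 2*K*(K-1)*L/N = ((4*K*L+8) + 2*K*(K-1)*L)/N) by (field; lra).
  assert (Hq : ((4*K*L+8) + 2*K*(K-1)*L)/N <= (K*L-1)*N/N).
  { apply Rmult_le_compat_r. apply Rlt_le, Rinv_0_lt_compat. lra. lra. }
  replace ((K*L-1)*N/N) with (K*L-1) in Hq by (field; lra).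
  lra.
Qed.

Lemma core_Phid K N L d : 6 <= K -> 16/9 * K^2 <= N -> 0.693 < L < 0.694 ->
  1 < d <= N/2 * K * L ->
  2*N/(N+1) - 4/(N-2) - 4*(d-1)*(K-1)/(N-2)^2 > 0.
Proof.
  intros HK HN HL Hd.
  assert (HN0 : 64 <= N) by nra.
  assert (4*(d-1)*(K-1) <= 9/8 * L * N^2) by nra.
  assert (4*(d-1)*(K-1)/(N-2)^2 <= 9/8 * L * N^2 / (N-2)^2).
  { apply Rmult_le_compat_r. apply Rlt_le, Rinv_0_lt_compat. nra. lra. }
  assert (9/8 * L * N^2 / (N-2)^2 <= 0.85).
  { apply Rmult_le_reg_r with ((N-2)^2). nra. field_simplify; nra. }
  assert (4/(N-2) <= 0.07).
  { apply Rmult_le_reg_r with (N-2). lra. field_simplify; nra. }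
  assert (2*N/(N+1) >= 1.9).
  { apply Rle_ge, Rmult_le_reg_r with (N+1). lra. field_simplify; nra. }
  lra.
Qed.

Lemma core_Phi K N L y : 6 <= K -> 16/9 * K^2 <= N -> 0.693 < L < 0.694 ->
  0 < y -> y <= (2/N) * (1 - (K-1)/N + K^2/(2*N^2)) -> y <= 2/N ->
  (L - 1/N) + ((N/2-2)*(K-1)*L - 1) * ((1 - 1/N)*y + ((1 - 1/N)*y)^2/2)
   - ((N/2-2)*K*L - 1) * (y + y^2/2 + 2/3*y^3) > 0.
Proof.
  intros HK HN HL Hy Hyh Hy2.
  assert (HN0 : 64 <= N) by nra.
  set (dK := (N/2-2)*L). set (c := (N/2-2)*(K-1)*L - 1).
  assert (H30 : 30 <= N/2 - 2) by lra.
  assert (H150 : 150 <= (N/2-2)*(K-1)) by nra.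
  assert (Hc0 : 0 <= c) by (unfold c; nra).
  assert (HdK : 0 <= dK) by (unfold dK; nra).
  assert (Hcle : c <= N/2*(K-1)*L) by (unfold c; nra).
  assert (HdKle : dK <= N/2*L) by (unfold dK; nra).
  assert (Ed : (N/2-2)*K*L - 1 = c + dK) by (unfold c, dK; ring).
  rewrite Ed.
  set (A1 := y * dK). set (A2 := y * c / N).
  set (A3 := y^2/2 * (dK + 2*c/N - c/N^2)). set (A4 := 2/3*(c+dK)*y^3).
  assert (EF : (L - 1/N) + c * ((1 - 1/N)*y + ((1 - 1/N)*y)^2/2) - (c + dK) * (y + y^2/2 + 2/3*y^3)
               = L - 1/N - A1 - A2 - A3 - A4).
  { unfold A1, A2, A3, A4. field. lra. }
  rewrite EF.
  assert (B1 : A1 <= (2/N) * (1 - (K-1)/N + K^2/(2*N^2)) * dK).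
  { unfold A1. apply Rmult_le_compat_r; lra. }
  unfold dK in B1.
  assert (B2 : A2 <= (K-1)*L/N).
  { unfold A2. apply Rle_trans with ((2/N) * (N/2*(K-1)*L) / N).
    unfold Rdiv. apply Rmult_le_compat_r. apply Rlt_le, Rinv_0_lt_compat; lra.
    apply Rmult_le_compat; lra. right. field. lra. }
  assert (Hy2' : y^2 <= 4/N^2).
  { replace (4/N^2) with ((2/N)^2) by (field; lra). apply pow_incr; lra. }
  assert (Hy3' : y^3 <= 8/N^3).
  { replace (8/N^3) with ((2/N)^3) by (field; lra). apply pow_incr; lra. }
  assert (B3 : A3 <= 2/N^2 * (N/2*L + (K-1)*L)).
  { unfold A3. 
    assert (0 <= c/N^2) by (apply Rdiv_le_0_compat; nra).
    assert (2*c/N <= (K-1)*L).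
    { apply Rle_trans with (2*(N/2*(K-1)*L)/N). unfold Rdiv. apply Rmult_le_compat_r.
      apply Rlt_le, Rinv_0_lt_compat; lra. lra. right. field. lra. }
    assert (0 <= dK + 2*c/N - c/N^2).
    { assert (c/N^2 <= c/N). { unfold Rdiv. apply Rmult_le_compat_l. lra.
        apply Rinv_le_contravar; nra. }
      assert (0 <= c/N) by (apply Rdiv_le_0_compat; lra). lra. }
    apply Rmult_le_compat. nra. lra. lra. lra. }
  assert (B4 : A4 <= 2/3 * (N/2*K*L) * (8/N^3)).
  { unfold A4. apply Rmult_le_compat. nra. nra.
    apply Rmult_le_compat_l. lra. unfold c, dK. nra. lra. }
  assert (Fin : L - 1/N - (2/N) * (1 - (K-1)/N + K^2/(2*N^2)) * ((N/2-2)*L) - (K-1)*L/N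
     - 2/N^2 * (N/2*L + (K-1)*L) - 2/3 * (N/2*K*L) * (8/N^3) > 0).
  { replace (L - 1/N - (2/N) * (1 - (K-1)/N + K^2/(2*N^2)) * ((N/2-2)*L) - (K-1)*L/N
     - 2/N^2 * (N/2*L + (K-1)*L) - 2/3 * (N/2*K*L) * (8/N^3)) with
     (((3*L - 1)*N - L*(K^2/2 + 26*K/3 - 6))/N^2 + 2*K^2*L/N^3) by (field; lra).
    assert (0 <= 2*K^2*L/N^3) by (apply Rdiv_le_0_compat; nra).
    assert (0 < ((3*L - 1)*N - L*(K^2/2 + 26*K/3 - 6))/N^2).
    { apply Rdiv_lt_0_compat. 2: nra.
      assert (Hk1 : K*(K - 6) >= 0) by (apply Rle_ge, Rmult_le_pos; nra).
      assert (Hk2 : (3*L-1)*(N - 16/9*K^2) >= 0) by (apply Rle_ge, Rmult_le_pos; nra).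
      assert (Hk3 : K^2*(L-0.693) >= 0) by (apply Rle_ge, Rmult_le_pos; nra).
      assert (Hk4 : K*(0.694 - L) >= 0) by (apply Rle_ge, Rmult_le_pos; nra).
      nra. }
    lra. }
  lra.
Qed.

Section G6.
Variable k : nat.
Hypothesis Hk : (6 <= k)%nat.

Let N := 2^k.
Let K := INR k.
Let L := ln 2.

Lemma HK6 : 6 <= K.
Proof. unfold K. replace 6 with (INR 6) by (simpl; lra). apply le_INR. lia. Qed.
Lemma HNK : 16/9 * K^2 <= N.
Proof. apply N_ge_K2. auto. Qed.
Lemma HL : 0.693 < L < 0.694.
Proof. unfold L. pose proof ln2_bounds. lra. Qed.
Lemma HN64 : 64 <= N.
Proof. pose proof HK6. pose proof HNK. nra. Qed.
Lemma HKm1 : INR (k-1) = K - 1.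
Proof. unfold K. rewrite minus_INR by lia. simpl. ring. Qed.

Lemma lb_eq : d_lbd k = (N/2 - 2) * K * L.
Proof.
  unfold d_lbd. destruct (Nat.eqb_spec k 4). lia.
  rewrite pow_km1_2 by lia. reflexivity.
Qed.
Lemma ub_eq : d_ubd k = N/2 * K * L.
Proof. unfold d_ubd. rewrite pow_km1_2 by lia. reflexivity. Qed.

Lemma aa_eq : aa k = 1/2 * (1 - 2/N).
Proof. unfold aa. fold N. field. pose proof HN64. lra. Qed.

Definition x1 := 1/2 * (1 - 1/N).

Lemma powy s : (1/2 * (1 - s))^(k-1) = 2/N * (1 - s)^(k-1).
Proof. rewrite Rpow_mult_distr, half_pow_km1 by lia. reflexivity. Qed.

Lemma lnN' : ln N = K * L.
Proof. apply lnN. Qed.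

Lemma lb_pos : 4 < d_lbd k.
Proof. rewrite lb_eq. pose proof HK6. pose proof HL. pose proof HN64.
  assert (30 <= N/2 - 2) by lra. assert (180 <= (N/2-2) * K) by nra. nra. Qed.

Lemma ya_le : 2/N * (1 - 2*(K-1)/N) <= (aa k)^(k-1).
Proof.
  rewrite aa_eq, powy. pose proof HN64.
  apply Rmult_le_compat_l. apply Rlt_le, Rdiv_lt_0_compat; lra.
  pose proof (Bern_lo (2/N) (k-1)). rewrite HKm1 in H0.
  replace (2*(K-1)/N) with ((K-1) * (2/N)) by (field; lra).
  apply H0. split. apply Rlt_le, Rdiv_lt_0_compat; lra.
  apply Rmult_le_reg_r with N. lra. unfold Rdiv. rewrite Rmult_assoc, Rinv_l; lra.
Qed.

Lemma E1_gen : G k (d_lbd k) (aa k) < 0.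
Proof.
  pose proof HN64 as HN. pose proof HK6. pose proof HL. pose proof lb_pos.
  assert (Haa : 0 < aa k < 1/2). { rewrite aa_eq. split. apply Rmult_lt_0_compat. lra.
    assert (2/N <= 1/32) by (apply Rmult_le_reg_r with N; [lra | unfold Rdiv; rewrite Rmult_assoc, Rinv_l; lra]). lra.
    assert (0 < 2/N) by (apply Rdiv_lt_0_compat; lra). lra. }
  apply G_neg_suff. lia. lra.
  rewrite hatPsi_val.
  pose proof (y_bounds k (aa k) ltac:(lia) ltac:(lra)) as Hy.
  pose proof (lnv_upper _ Hy). pose proof ya_le.
  assert (Hlb1 : (d_lbd k - 1) * ln ((1 - 2 * aa k ^ (k-1)) / (1 - aa k ^ (k-1))) <=
      - (d_lbd k - 1) * (2/N * (1 - 2*(K-1)/N))).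
  { assert ((d_lbd k - 1) * ln ((1 - 2 * aa k ^ (k-1)) / (1 - aa k ^ (k-1))) <=
      (d_lbd k - 1) * (- aa k ^ (k-1) - (aa k ^ (k-1))^2)) by (apply Rmult_le_compat_l; lra).
    assert (0 <= (aa k ^ (k-1))^2) by nra. nra. }
  assert (Erhs : (1 - 2 * aa k) / (1 - aa k) = / (N * (1 + 2/N) / (2*2))).
  { rewrite aa_eq. field. lra. }
  assert (H2N : 0 < 2/N) by (apply Rdiv_lt_0_compat; lra).
  assert (El : ln (N * (1 + 2/N) / (2*2)) = K*L + ln (1 + 2/N) - 2*L).
  { rewrite ln_div by (try apply Rmult_lt_0_compat; lra).
    rewrite ln_mult by lra. rewrite ln_mult by lra. rewrite lnN'. fold L. ring. }
  rewrite Erhs, ln_Rinv, El by (apply Rdiv_lt_0_compat; [apply Rmult_lt_0_compat|]; lra).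
  pose proof (ln1p_le (2/N) ltac:(assert (0 < 2/N) by (apply Rdiv_lt_0_compat; lra); lra)).
  pose proof (core_E1 K N L HK6 HNK HL). rewrite lb_eq in *. lra.
Qed.


Lemma x1_range : aa k <= x1 <= 1/2 /\ 0 < x1.
Proof.
  pose proof HN64. rewrite aa_eq. unfold x1.
  assert (0 < 1/N) by (apply Rdiv_lt_0_compat; lra).
  assert (1/N <= 1/64) by (apply Rmult_le_compat_l; [lra | apply Rinv_le_contravar; lra]).
  split; [split|]; lra.
Qed.

Lemma yb_le : 2/N * (1 - (K-1)/N) <= x1^(k-1).
Proof.
  unfold x1. rewrite powy. pose proof HN64.
  apply Rmult_le_compat_l. apply Rlt_le, Rdiv_lt_0_compat; lra.
  pose proof (Bern_lo (1/N) (k-1)). rewrite HKm1 in H0.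
  replace ((K-1)/N) with ((K-1) * (1/N)) by (field; lra).
  apply H0. split. apply Rlt_le, Rdiv_lt_0_compat; lra.
  apply Rmult_le_reg_r with N. lra. unfold Rdiv. rewrite Rmult_assoc, Rinv_l; lra.
Qed.

Lemma yh_ge : x1^(k-1) <= (2/N) * (1 - (K-1)/N + K^2/(2*N^2)).
Proof.
  unfold x1. rewrite powy. pose proof HN64. pose proof HK6.
  apply Rmult_le_compat_l. apply Rlt_le, Rdiv_lt_0_compat; lra.
  pose proof (Bern_hi (1/N) (k-1)). rewrite HKm1 in H1.
  assert (H01 : 0 <= 1/N <= 1).
  { split. apply Rlt_le, Rdiv_lt_0_compat; lra.
    apply Rmult_le_reg_r with N. lra. unfold Rdiv. rewrite Rmult_assoc, Rinv_l; lra. }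
  specialize (H1 H01).
  assert ((K-1)*(K-1)*(1/N)^2/2 <= K^2/(2*N^2)).
  { replace ((K-1)*(K-1)*(1/N)^2/2) with ((K-1)^2/(2*N^2)) by (field; lra).
    unfold Rdiv. apply Rmult_le_compat_r. apply Rlt_le, Rinv_0_lt_compat. nra. nra. }
  replace ((K-1)/N) with ((K-1) * (1/N)) by (field; lra). lra.
Qed.

Lemma y2_le : x1^(k-1) <= 2/N.
Proof.
  replace (2/N) with ((1/2)^(k-1)) by (rewrite half_pow_km1 by lia; reflexivity).
  apply pow_incr. pose proof x1_range. lra.
Qed.

Lemma G1_gen : G k (d_lbd k) x1 < 0.
Proof.
  pose proof HN64 as HN. pose proof HK6. pose proof HL. pose proof lb_pos.
  pose proof x1_range as [Hx1 Hx1p]. pose proof (aa_ge k ltac:(lia)).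
  assert (Hx1' : x1 < 1/2). { unfold x1. assert (0 < 1/N) by (apply Rdiv_lt_0_compat; lra). lra. }
  apply G_neg_suff. lia. lra.
  rewrite hatPsi_val.
  pose proof (y_bounds k x1 ltac:(lia) ltac:(lra)) as Hy.
  pose proof (lnv_upper _ Hy). pose proof yb_le.
  assert (Hlb1 : (d_lbd k - 1) * ln ((1 - 2 * x1 ^ (k-1)) / (1 - x1 ^ (k-1))) <=
      - (d_lbd k - 1) * (2/N * (1 - (K-1)/N))).
  { assert ((d_lbd k - 1) * ln ((1 - 2 * x1 ^ (k-1)) / (1 - x1 ^ (k-1))) <=
      (d_lbd k - 1) * (- x1 ^ (k-1) - (x1 ^ (k-1))^2)) by (apply Rmult_le_compat_l; lra).
    assert (0 <= (x1 ^ (k-1))^2) by nra. nra. }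
  assert (Erhs : (1 - 2 * x1) / (1 - x1) = / (N * (1 + 1/N) / 2)).
  { unfold x1. field. lra. }
  assert (H2N : 0 < 1/N) by (apply Rdiv_lt_0_compat; lra).
  assert (El : ln (N * (1 + 1/N) / 2) = K*L + ln (1 + 1/N) - L).
  { rewrite ln_div by (try apply Rmult_lt_0_compat; lra).
    rewrite ln_mult by lra. rewrite lnN'. fold L. ring. }
  rewrite Erhs, ln_Rinv, El by (apply Rdiv_lt_0_compat; [apply Rmult_lt_0_compat|]; lra).
  pose proof (ln1p_le (1/N) ltac:(lra)).
  pose proof (core_G1 K N L HK6 HNK HL). rewrite lb_eq in *. lra.
Qed.

Lemma C1_gen : (aa k)^(k-1) * (d_lbd k - 4) >= 1.
Proof.
  pose proof ya_le. pose proof lb_pos. pose proof (core_C1 K N L HK6 HNK HL).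
  rewrite lb_eq in *.
  assert (2/N * (1 - 2*(K-1)/N) * ((N/2-2)*K*L - 4) <= aa k ^ (k-1) * ((N/2-2)*K*L - 4))
    by (apply Rmult_le_compat_r; lra).
  lra.
Qed.

Lemma Phi_gen : Phi k (d_lbd k) x1 > 0.
Proof.
  pose proof HN64 as HN. pose proof HK6. pose proof HL as HL'. pose proof lb_pos.
  pose proof x1_range as [Hx1 Hx1p]. pose proof (aa_ge k ltac:(lia)).
  assert (Hdl0 : d_lbd k <> 0) by lra.
  pose proof (Phi_lower k (d_lbd k) x1 ltac:(lia) ltac:(lra) ltac:(lra)) as HP.
  rewrite c_eq in HP by (lia || auto).
  assert (Ec : d_lbd k - d_lbd k / INR k - 1 = (N/2-2)*(K-1)*L - 1).
  { rewrite lb_eq. unfold K. field. apply not_0_INR. lia. }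
  rewrite Ec in HP.
  assert (Hc : 0 <= (N/2-2)*(K-1)*L - 1).
  { assert (30 <= N/2 - 2) by lra. assert (150 <= (N/2-2)*(K-1)) by nra. nra. }
  specialize (HP Hc).
  rewrite (pow_S1 x1 k) in HP by lia.
  assert (Ex : 2 * (x1 * x1^(k-1)) = (1 - 1/N) * x1^(k-1)) by (unfold x1; field; lra).
  rewrite Ex in HP.
  assert (Hl : - ln (1 - x1) >= L - 1/N).
  { assert (E1x : 1 - x1 = (1 + 1/N) / 2) by (unfold x1; field; lra). rewrite E1x.
    rewrite ln_div by (try apply Rdiv_lt_0_compat; try lra; assert (0 < 1/N) by (apply Rdiv_lt_0_compat; lra); lra).
    pose proof (ln1p_le (1/N) ltac:(assert (0 < 1/N) by (apply Rdiv_lt_0_compat; lra); lra)).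
    fold L. lra. }
  pose proof (y_bounds k x1 ltac:(lia) ltac:(lra)) as Hy.
  pose proof (core_Phi K N L (x1^(k-1)) HK6 HNK HL ltac:(lra) yh_ge y2_le).
  rewrite lb_eq in *. lra.
Qed.

Lemma Phid_gen d x : d_lbd k <= d <= d_ubd k -> x1 <= x <= 1/2 -> Phid k d x > 0.
Proof.
  intros Hd Hx. pose proof HN64 as HN. pose proof HK6. pose proof HL as HL'. pose proof lb_pos.
  pose proof x1_range as [Hx1 Hx1p].
  apply (Phid_pos_generic k d x x1 (1/2)); try lia; try lra.
  rewrite quarter_pow by lia. fold N. rewrite HKm1.
  replace (1 / (1 - x1) - 2 * (1 / 2) * (4 / N) / (1 - 2 * (1 / 2) ^ 2 * (4 / N)) -
    (d - 1) * (K - 1) * (4 / N) * (1 - 2 * x1) /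
    ((1 - 2 * (1 / 2) ^ 2 * (4 / N)) * (1 - 1 / 2 * (4 / N)))) with
    (2*N/(N+1) - 4/(N-2) - 4*(d-1)*(K-1)/(N-2)^2).
  2: { unfold x1. field. repeat split; lra. }
  apply (core_Phid K N L d); auto. apply HNK. rewrite ub_eq, lb_eq in *. lra.
Qed.

End G6.

Lemma assemble k : (4 <= k)%nat -> d_lbd k < d_ubd k -> 4 < d_lbd k ->
  G k (d_lbd k) (aa k) < 0 -> (aa k)^(k-1) * (d_lbd k - 4) >= 1 ->
  (exists x1, aa k <= x1 <= 1/2 /\ G k (d_lbd k) x1 < 0 /\
     (forall x, x1 <= x <= 1/2 -> Phid k (d_lbd k) x > 0) /\ Phi k (d_lbd k) x1 > 0) ->
  (exists x1, aa k <= x1 <= 1/2 /\ G k (d_ubd k) x1 < 0 /\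
     (forall x, x1 <= x <= 1/2 -> Phid k (d_ubd k) x > 0)) ->
  continuous_on_closed (Phistar k) (d_lbd k) (d_ubd k) /\
  Phistar k (d_lbd k) > 0 /\ Phistar k (d_ubd k) < 0.
Proof.
  intros Hk Hlu Hl4 HE1 HC1 [x1 [Hx1 [HG1 [HD1 HP1]]]] [x2 [Hx2 [HG2 HD2]]].
  pose proof (aa_ge k Hk). pose proof (aa_lt k).
  assert (Hgood : forall d, d_lbd k <= d <= d_ubd k -> good k d).
  { intros d Hd. split; auto. split. lra. split.
    - pose proof (G_mono_d k (d_lbd k) d (aa k) Hk ltac:(lra) ltac:(lra)). lra.
    - assert (0 <= aa k ^ (k-1)) by (apply pow_le; lra).
      assert (aa k ^ (k-1) * (d_lbd k - 4) <= aa k ^ (k-1) * (d - 4)) by (apply Rmult_le_compat_l; lra).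
      lra. }
  split. apply Phistar_cont; auto; lra.
  split.
  - apply (sign_lb k (d_lbd k) x1); auto. apply Hgood; lra.
  - apply (sign_ub k (d_ubd k) x2); auto. apply Hgood; lra.
    apply Phi_ub_half; auto.
Qed.

Theorem lemma3p2 (k : nat) (hk : (4 <= k)%nat) :
  continuous_on_closed (Phistar k) (d_lbd k) (d_ubd k) /\
  Phistar k (d_lbd k) > 0 /\
  Phistar k (d_ubd k) < 0.
Proof.
  pose proof ln2_bounds as HL.
  destruct (Nat.eq_dec k 4) as [e4|n4].
  { subst k. apply assemble; auto.
    - rewrite lb4, ub4. lra.
    - rewrite lb4. lra.
    - rewrite lb4, aa4. exact E1_k4.
    - rewrite lb4. apply C1_k4. lra.
    - rewrite lb4, aa4. exists (7/16). split. lra. split. exact E1_k4. split. exact Phid_lb_k4. exact Phi_lb_k4.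
    - rewrite ub4, aa4. exists (15/32). split. lra. split. exact G_ub_k4. exact Phid_ub_k4. }
  destruct (Nat.eq_dec k 5) as [e5|n5].
  { subst k. apply assemble; auto.
    - rewrite lb5, ub5. lra.
    - rewrite lb5. lra.
    - rewrite lb5, aa5. exact E1_k5.
    - rewrite lb5. apply C1_k5. lra.
    - rewrite lb5, aa5. exists (15/32). split. lra. split. exact E1_k5. split.
      intros x Hx. apply Phid_k5; lra. exact Phi_lb_k5.
    - rewrite ub5, aa5. exists (15/32). split. lra. split.
      pose proof (G_mono_d 5 (70 * ln 2) (80 * ln 2) (15/32) ltac:(lia) ltac:(lra) ltac:(lra)).
      pose proof E1_k5. lra.
      intros x Hx. apply Phid_k5; lra. }
  assert (Hk6 : (6 <= k)%nat) by lia.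
  pose proof (lb_pos k Hk6) as Hlb.
  pose proof (x1_range k Hk6) as [Hx1 Hx1p].
  assert (Hlu : d_lbd k < d_ubd k).
  { rewrite (lb_eq k Hk6), (ub_eq k Hk6). pose proof (HK6 k Hk6). nra. }
  apply assemble; auto.
  - apply E1_gen; auto.
  - apply C1_gen; auto.
  - exists (x1 k). split. auto. split. apply G1_gen; auto. split.
    intros x Hx. apply Phid_gen; auto; lra. apply Phi_gen; auto.
  - exists (x1 k). split. auto. split.
    pose proof (G_mono_d k (d_lbd k) (d_ubd k) (x1 k) ltac:(lia) ltac:(lra) ltac:(lra)).
    pose proof (G1_gen k Hk6). lra.
    intros x Hx. apply Phid_gen; auto; lra.
Qed.
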